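(* Let $n\ge 1$, $i\in\{1,\ldots,n-1\}$, and let $C$ be a set of transpositions in $S_n$ with $s_i\in C$. Put $D=C\cap s_iCs_i$. Then $\partial_i$ is defined on $H_C$, and $\partial_i(H_C)\subseteq H_D$.
   Context: Let $S_n$ be the symmetric group on $\{1,\ldots,n\}$ with $(vw)(j)=v(w(j))$, and $s_i=(i\leftrightarrow i+1)$. Let $H=\mathrm{Fun}(S_n,\mathbb{C}[t_1,\ldots,t_n])$ with pointwise operations. The star action of $w\in S_n$ on $f\in H$ is $(f*w)(v)=f(vw^{-1})$. Let $x_i\in H$ be the function $v\mapsto t_{v(i)}$. For a transposition $\tau=(i\leftrightarrow k)$, $f\in H$ satisfies condition $\tau$ if $f-f*\tau=(x_i-x_k)g$ for some $g\in H$; these form a subring $H_\tau$, and for a set $C$ of transpositions $H_C=\bigcap_{\tau\in C}H_\tau$ (with $H_\varnothing=H$). For $f\in H_{s_i}$, $\partial_i(f)$ is the unique $g\in H$ with $f-f*s_i=(x_i-x_{i+1})g$; $\partial_i$ is defined exactly on $H_{s_i}$. *)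

(* Defs.v *)
From HB Require Import structures.
From mathcomp Require Import all_boot all_algebra all_fingroup.
From mathcomp Require Import reals complex.
From mathcomp Require Import mpoly.

Set Implicit Arguments.
Unset Strict Implicit.
Unset Printing Implicit Defensive.

Import GRing.Theory.
Local Open Scope ring_scope.

Section HDefs.
Variable R : realType.
Variable n : nat.

(* the coefficient ring C[t_1,...,t_n]; variables indexed 0..n-1 *)
Definition Cpoly := {mpoly (complex R)[n]}.

Definition H := {perm 'I_n} -> Cpoly.

(* composition with the paper's convention (v w)(j) = v (w j);
   note mathcomp's product is (s * t) x = t (s x), so v o w = w * v *)
Definition pcomp (v w : {perm 'I_n}) : {perm 'I_n} := (w * v)%g.

Definition star (f : H) (w : {perm 'I_n}) : H := fun v => f (pcomp v w^-1%g).

Definition xfun (i : 'I_n) : H := fun v => 'X_(v i).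

Definition cond_pair (i k : 'I_n) (f : H) : Prop :=
  exists g : H, forall v, f v - star f (tperm i k) v = (xfun i v - xfun k v) * g v.

Definition is_transposition (tau : {perm 'I_n}) : Prop :=
  exists i k : 'I_n, i != k /\ tau = tperm i k.

Definition in_Htau (tau : {perm 'I_n}) (f : H) : Prop :=
  exists i k : 'I_n, [/\ i != k, tau = tperm i k & cond_pair i k f].

Definition in_HC (C : {set {perm 'I_n}}) (f : H) : Prop :=
  forall tau, tau \in C -> in_Htau tau f.

Definition conj_set (s : {perm 'I_n}) (C : {set {perm 'I_n}}) : {set {perm 'I_n}} :=
  [set pcomp (pcomp s c) s | c in C].

(* g = partial_i f, for the simple transposition s_i = (i <-> j), j = i+1:
   f - f * s_i = (x_i - x_j) g  (g is unique when it exists) *)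
Definition is_divdiff (i j : 'I_n) (f g : H) : Prop :=
  forall v, f v - star f (tperm i j) v = (xfun i v - xfun j v) * g v.

End HDefs.

(* Main.v *)
Set Warnings "-all".
Require Import Defs.
From HB Require Import structures.
From mathcomp Require Import all_boot all_algebra all_fingroup.
From mathcomp Require Import reals complex.
From mathcomp Require Import mpoly.
From mathcomp Require Import ring.
From Stdlib Require Import ClassicalEpsilon.
Set Implicit Arguments.
Unset Strict Implicit.
Unset Printing Implicit Defensive.
Import GRing.Theory.
Local Open Scope ring_scope.

Section P.
Variable K : fieldType.
Variable n : nat.
Local Notation P := {mpoly K[n]}.

Definition rr (x y k : 'I_n) : 'I_n := if k == x then y else k.
Definition lq (x y : 'I_n) : n.-tuple P := [tuple 'X_(rr x y k) | k < n].
Definition sub (x y : 'I_n) (p : P) : P := p \mPo lq x y.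

Lemma subX x y k : sub x y 'X_k = 'X_(rr x y k).
Proof. by rewrite /sub comp_mpolyXU -tnth_nth tnth_mktuple. Qed.

Lemma subB x y : {morph sub x y : p q / p - q}.
Proof. by move=> p q; rewrite /sub rmorphB. Qed.
Lemma subM x y : {morph sub x y : p q / p * q}.
Proof. by move=> p q; rewrite /sub rmorphM. Qed.

Lemma subBX x y k l : sub x y ('X_k - 'X_l) = 'X_(rr x y k) - 'X_(rr x y l).
Proof. by rewrite subB !subX. Qed.

Lemma subBX' x y k l k' l' : rr x y k = rr x y k' -> rr x y l = rr x y l' ->
  sub x y ('X_k - 'X_l) = 'X_(rr x y k') - 'X_(rr x y l').
Proof. by move=> <- <-; rewrite subB !subX. Qed.

Lemma subXX x y : sub x y ('X_x - 'X_y) = 0.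
Proof. by rewrite subB !subX /rr eqxx; case: eqP => [->|]; rewrite subrr. Qed.
Lemma subXX' x y : sub x y ('X_y - 'X_x) = 0.
Proof. by rewrite subB !subX /rr eqxx; case: eqP => [->|]; rewrite subrr. Qed.

Lemma sub_kill x y p q : p = ('X_x - 'X_y) * q \/ p = ('X_y - 'X_x) * q -> sub x y p = 0.
Proof. by case=> ->; rewrite subM ?subXX ?subXX' mul0r. Qed.

Lemma XB_neq0 x y : x != y -> ('X_x - 'X_y : P) != 0.
Proof.
move=> nxy; apply/eqP => /(congr1 (mcoeff U_(x))).
rewrite mcoeffB !mcoeffXU eqxx eq_sym (negbTE nxy) subr0 mcoeff0 => /eqP.
by rewrite oner_eq0.
Qed.

Definition Ip x y (p : P) := exists q, p - sub x y p = ('X_x - 'X_y) * q.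

Lemma Ip_all x y p : Ip x y p.
Proof.
have I0 : Ip x y 0 by exists 0; rewrite /sub raddf0 subr0 mulr0.
have ID : forall p q, Ip x y p -> Ip x y q -> Ip x y (p + q).
  move=> p1 p2 [q1 h1] [q2 h2]; exists (q1 + q2).
  rewrite /sub raddfD -/(sub x y p1) -/(sub x y p2) mulrDr -h1 -h2.
  by rewrite opprD addrACA.
have IM : forall p q, Ip x y p -> Ip x y q -> Ip x y (p * q).
  move=> p1 p2 [q1 h1] [q2 h2]; exists (q1 * p2 + sub x y p1 * q2).
  rewrite subM mulrDr mulrA -h1 mulrCA -h2; ring.
have I1 : Ip x y 1 by exists 0; rewrite /sub comp_mpoly1 subrr mulr0.
have IC : forall c, Ip x y c%:MP by move=> c; exists 0; rewrite /sub comp_mpolyC subrr mulr0.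
have IX : forall k, Ip x y 'X_k.
  move=> k; rewrite /Ip subX /rr; case: eqP => [->|_].
    by exists 1; rewrite mulr1.
  by exists 0; rewrite subrr mulr0.
rewrite [p]mpolyE; apply: (big_ind (Ip x y)) => //.
move=> m _; rewrite -mul_mpolyC; apply: (IM) => //.
rewrite mpolyXE_id; apply: (big_ind (Ip x y)) => //.
move=> k _; elim: (m k) => [|e IH]; first by rewrite expr0.
by rewrite exprS; apply: (IM).
Qed.

Lemma sub_div x y p : sub x y p = 0 -> exists q, p = ('X_x - 'X_y) * q.
Proof. by move=> h; have [q hq] := Ip_all x y p; exists q; rewrite -hq h subr0. Qed.

End P.

Lemma tperm_pair (m : nat) (a b a' b' : 'I_m) :
  tperm a b = tperm a' b' -> a' != b' -> (a = a' /\ b = b') \/ (a = b' /\ b = a').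
Proof.
move=> h nab; have := congr1 (fun p : {perm 'I_m} => p a') h.
rewrite /= tpermL; case: tpermP => [->|->|].
- by move=> ->; left.
- by move=> ->; right.
- by move=> _ _ e; rewrite e eqxx in nab.
Qed.

Theorem corollary1 (R : realType) (n : nat) (hn : (1 <= n)%N)
    (i j : 'I_n) (hij : val j = (val i).+1)
    (C : {set {perm 'I_n}})
    (hC : forall tau, tau \in C -> is_transposition tau)
    (hsC : tperm i j \in C) :
  let D := C :&: conj_set (tperm i j) C in
  forall f : H R n, in_HC C f ->
    in_Htau (tperm i j) f /\
    (forall g : H R n, is_divdiff i j f g -> in_HC D g).
Proof.
move=> D f hf; split; first exact: hf.
move=> g hg tau; rewrite inE => /andP [tauC /imsetP [c cC taueq]].
have nij : i != j.
  by apply/eqP => e; move: hij; rewrite e => /eqP; rewrite ltn_eqF.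
have hdiv : forall w, f w - f (tperm i j * w)%g = ('X_(w i) - 'X_(w j)) * g w.
  by move=> w; have := hg w; rewrite /star /Defs.pcomp tpermV.
have [a [b [nab taue [h1 hh1]]]] := hf _ tauC.
exists a, b; split => //.
suff hq : forall v, exists q, g v - g (tau * v)%g = ('X_(v a) - 'X_(v b)) * q.
  exists (fun v => proj1_sig (constructive_indefinite_description _ (hq v))).
  move=> v; rewrite /star /Defs.pcomp tpermV -taue /xfun.
  exact: (proj2_sig (constructive_indefinite_description _ (hq v))).
move=> v.
have vinj : forall x y, (v x == v y) = (x == y) by move=> x y; rewrite (inj_eq (@perm_inj _ v)).
case: (boolP (rr (v a) (v b) (v i) == rr (v a) (v b) (v j))) => [req|rneq].
  have taus : tau = tperm i j.
    move: req; rewrite /rr !vinj.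
    case: (eqVneq i a) => [ea|nia].
      rewrite -ea [j == i]eq_sym (negbTE nij) => /eqP/perm_inj e.
      by rewrite taue -ea e.
    case: (eqVneq j a) => [ea|nja].
      move=> /eqP/perm_inj e.
      by rewrite taue -ea -e tpermC.
    by move/eqP/perm_inj => e; rewrite e eqxx in nij.
  exists 0; rewrite mulr0; apply/eqP; rewrite subr_eq0; apply/eqP.
  have e1 := hdiv v; have e2 := hdiv (tperm i j * v)%g.
  move: e2; rewrite mulgA tperm2 mul1g !permM tpermL tpermR => e2.
  have : ('X_(v i) - 'X_(v j)) * (g v - g (tperm i j * v)%g) = 0.
    have -> : ('X_(v i) - 'X_(v j)) * (g v - g (tperm i j * v)%g) =
       ('X_(v i) - 'X_(v j)) * g v + ('X_(v j) - 'X_(v i)) * g (tperm i j * v)%g by ring.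
    rewrite -e1 -e2; ring.
  move/eqP; rewrite mulf_eq0 (negbTE (XB_neq0 _ _)) ?vinj //= subr_eq0.
  by rewrite taus => /eqP.
apply: sub_div.
have F1 : sub (v a) (v b) (f v - f (tau * v)%g) = 0.
  apply: (sub_kill (q := h1 v)); left.
  by have := hh1 v; rewrite /star /Defs.pcomp tpermV -taue.
have [a' [b' [nab' ce [h2 hh2]]]] := hf _ cC.
have cE : c = (tperm i j * tau * tperm i j)%g.
  by rewrite taueq /Defs.pcomp !mulgA tperm2 mul1g -mulgA tperm2 mulg1.
have cE2 : tperm (tperm i j a) (tperm i j b) = tperm a' b'.
  by rewrite -ce cE -tpermJ -taue conjgE tpermV mulgA.
have ecs : (c * (tperm i j * v) = tperm i j * (tau * v))%g.
  by rewrite cE !mulgA -(mulgA _ (tperm i j) (tperm i j)) tperm2 mulg1.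
have F2 : sub (v a) (v b) (f (tperm i j * v)%g - f (tperm i j * (tau * v))%g) = 0.
  have := hh2 (tperm i j * v)%g; rewrite /star /Defs.pcomp tpermV -ce ecs /xfun !permM.
  have [[ea eb]|[ea eb]] := tperm_pair cE2 nab'.
    by rewrite -ea -eb !tpermK => hw; apply: (sub_kill (q := h2 (tperm i j * v)%g)); left.
  by rewrite -ea -eb !tpermK => hw; apply: (sub_kill (q := h2 (tperm i j * v)%g)); right.
have rrt : forall k, rr (v a) (v b) ((tau * v)%g k) = rr (v a) (v b) (v k).
  move=> k; rewrite permM taue /rr; case: tpermP => [->|->|] //.
    by rewrite vinj eq_sym (negbTE nab) eqxx.
  by rewrite eqxx; case: ifP.
have e1 : sub (v a) (v b) (f v) - sub (v a) (v b) (f (tperm i j * v)%g) =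
   ('X_(rr (v a) (v b) (v i)) - 'X_(rr (v a) (v b) (v j))) * sub (v a) (v b) (g v).
  rewrite -subB hdiv subM; congr (_ * _); exact: subBX.
have e2 : sub (v a) (v b) (f (tau * v)%g) - sub (v a) (v b) (f (tperm i j * (tau * v))%g) =
   ('X_(rr (v a) (v b) (v i)) - 'X_(rr (v a) (v b) (v j))) * sub (v a) (v b) (g (tau * v)%g).
  rewrite -subB hdiv subM; congr (_ * _); apply: subBX'; [exact: rrt | exact: rrt].
move: F1 F2; rewrite !subB => /eqP; rewrite subr_eq0 => /eqP F1 /eqP; rewrite subr_eq0 => /eqP F2.
have : ('X_(rr (v a) (v b) (v i)) - 'X_(rr (v a) (v b) (v j))) * sub (v a) (v b) (g v) =
   ('X_(rr (v a) (v b) (v i)) - 'X_(rr (v a) (v b) (v j))) * sub (v a) (v b) (g (tau * v)%g).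
  exact: (etrans (esym e1) (etrans (congr2 (fun x y => x - y) F1 F2) e2)).
move/(mulfI (@XB_neq0 _ _ _ _ rneq)) => e; apply/eqP; rewrite subr_eq0; apply/eqP; exact: e.
Qed.
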